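(* Let $\mathcal{T}$ be an unweighted tree on $L$ vertices with diameter $\mathrm{diam}(\mathcal{T})$, and let $f:\mathbb{N}\to\mathbb{R}$ be an arbitrary function. Then the mask matrix $\mathbf{M} = [f(\mathrm{dist}_{\mathcal{T}}(i,j))]_{i,j=1,\dots,L}$ supports matrix-vector multiplication in time $O(L\cdot\mathrm{diam}(\mathcal{T}))$.
   Context: $\mathrm{dist}_{\mathcal{T}}(i,j)$ is the number of edges on the path between $i$ and $j$; $\mathrm{diam}(\mathcal{T})$ is the maximum of $\mathrm{dist}_{\mathcal{T}}(i,j)$ over all pairs. Values of $f$ are assumed available in $O(1)$ time each; time counts arithmetic operations. *)

(* Defs.v *)
From HB Require Import structures.
From mathcomp Require Import all_boot all_order all_algebra.
From mathcomp Require Import reals.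
Set Implicit Arguments. Unset Strict Implicit. Unset Printing Implicit Defensive.
Import Order.TTheory GRing.Theory Num.Theory.
Local Open Scope ring_scope.

Definition simple_graph (L : nat) (e : rel 'I_L) : Prop :=
  symmetric e /\ irreflexive e.

Definition num_edges (L : nat) (e : rel 'I_L) : nat :=
  (#|[set p : 'I_L * 'I_L | e p.1 p.2]| %/ 2)%N.

Definition is_tree (L : nat) (e : rel 'I_L) : Prop :=
  [/\ (0 < L)%N, simple_graph e,
      (forall i j : 'I_L, connect e i j) & num_edges e = L.-1].

Definition walk_of_len (L : nat) (e : rel 'I_L) (i j : 'I_L) (n : nat) : bool :=
  [exists p : n.-tuple 'I_L, path e i p && (last i p == j)].

(* dist e i j = number of edges on a shortest path from i to j
   (in a tree, the number of edges of the unique path). For a connected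
   graph on L vertices this is < L; the value L is never reached. *)
Definition dist (L : nat) (e : rel 'I_L) (i j : 'I_L) : nat :=
  find (walk_of_len e i j) (iota 0 L).

Definition diam (L : nat) (e : rel 'I_L) : nat :=
  (\max_(p : 'I_L * 'I_L) dist e p.1 p.2)%N.

Definition mask_mx (R : nzRingType) (L : nat) (e : rel 'I_L) (f : nat -> R)
  : 'M[R]_L := \matrix_(i, j) f (dist e i j).

(* Each instruction computes one new register value (unit cost).
   Registers are numbered 0,1,2,... in order of creation; references to a
   non-existent register read 0. *)
Inductive instr : Type :=
  | IInput of nat
  | IConstF of nat       (* read the value f(k) (O(1) oracle access)    *)
  | IAdd of nat & nat
  | ISub of nat & nat
  | IMul of nat & nat.

Definition exec_instr (R : nzRingType) (L : nat) (f : nat -> R) (x : 'cV[R]_L)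
  (regs : seq R) (c : instr) : R :=
  match c with
  | IInput k => if insub k is Some i then x i ord0 else 0
  | IConstF k => f k
  | IAdd a b => nth 0 regs a + nth 0 regs b
  | ISub a b => nth 0 regs a - nth 0 regs b
  | IMul a b => nth 0 regs a * nth 0 regs b
  end.

Definition run (R : nzRingType) (L : nat) (f : nat -> R) (x : 'cV[R]_L)
  (prog : seq instr) : seq R :=
  foldl (fun regs c => rcons regs (exec_instr f x regs c)) [::] prog.

(* Main.v *)
Require Import Defs.
From HB Require Import structures.
From mathcomp Require Import all_boot all_order all_algebra.
From mathcomp Require Import reals.
From mathcomp Require Import zify.
Set Implicit Arguments. Unset Strict Implicit. Unset Printing Implicit Defensive.
Import Order.TTheory GRing.Theory Num.Theory.

Section Walks.
Variable n : nat.
Variable e : rel 'I_n.+1.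
Hypothesis hsym : symmetric e.
Hypothesis econn : forall i j : 'I_n.+1, connect e i j.

Lemma walkP (i j : 'I_n.+1) m :
  reflect (exists s : seq 'I_n.+1, [/\ size s = m, path e i s & last i s = j])
          (walk_of_len e i j m).
Proof.
apply: (iffP existsP).
  by move=> [t /andP[Hp /eqP Hl]]; exists (tval t); rewrite size_tuple.
move=> [s [Hs Hp Hl]]; subst m.
by exists (in_tuple s); rewrite /= Hp Hl eqxx.
Qed.

Lemma dist_le i j m : walk_of_len e i j m -> (dist e i j <= m)%N.
Proof.
move=> W; rewrite /dist.
case: (ltnP m n.+1) => Hm.
  rewrite leqNgt; apply/negP => Hlt.
  have := before_find 0 Hlt.
  by rewrite nth_iota // add0n W.
apply: leq_trans Hm.
by have := find_size (walk_of_len e i j) (iota 0 n.+1); rewrite size_iota.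
Qed.

Lemma walk_exists i j : exists2 m, (m < n.+1)%N & walk_of_len e i j m.
Proof.
have := econn i j; move/connectP => [p Hp Hl].
rewrite Hl; case: (shortenP Hp) => p' Hp' Hu _.
exists (size p'); last by apply/walkP; exists p'.
move: Hu => /card_uniqP Hsz.
change (size (i :: p') <= n.+1)%N.
by rewrite -Hsz; apply: leq_trans (max_card _) _; rewrite card_ord.
Qed.

Lemma dist_walk i j : walk_of_len e i j (dist e i j).
Proof.
case: (walk_exists i j) => m Hm W.
have Hh : has (walk_of_len e i j) (iota 0 n.+1).
  by apply/hasP; exists m => //; rewrite mem_iota.
have := nth_find 0 Hh.
rewrite nth_iota //.
by move: Hh; rewrite has_find size_iota.
Qed.

Lemma dist_lt i j : (dist e i j < n.+1)%N.
Proof.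
case: (walk_exists i j) => m Hm W.
by apply: leq_ltn_trans (dist_le W) Hm.
Qed.


Lemma dist_self i : dist e i i = 0%N.
Proof. by apply/eqP; rewrite -leqn0; apply: dist_le; apply/walkP; exists [::]. Qed.

Lemma dist0 i j : dist e i j = 0%N -> i = j.
Proof. by move=> H; have /walkP[s [Hs _ Hl]] := dist_walk i j; rewrite H in Hs; move/size0nil: Hs Hl => -> /=. Qed.

Lemma dist_stepl u v j : e u v -> (dist e u j <= (dist e v j).+1)%N.
Proof.
move=> Huv; apply: dist_le; have /walkP[s [Hs Hp Hl]] := dist_walk v j.
by apply/walkP; exists (v :: s); rewrite /= Hs Huv Hp.
Qed.

Lemma dist_stepr i u v : e u v -> (dist e i v <= (dist e i u).+1)%N.
Proof.
move=> Huv; apply: dist_le; have /walkP[s [Hs Hp Hl]] := dist_walk i u.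
by apply/walkP; exists (rcons s v); rewrite size_rcons Hs rcons_path Hp Hl Huv last_rcons.
Qed.

Lemma dist_pred i j m : dist e i j = m.+1 -> exists w, e w j /\ dist e i w = m.
Proof.
move=> H; have /walkP[s [Hs Hp Hl]] := dist_walk i j.
rewrite H in Hs; case/lastP: s Hs Hp Hl => [//|s y].
rewrite size_rcons rcons_path last_rcons => -[Hs] /andP[Hp Hy] Hl; subst y.
exists (last i s); split => //.
have H1 : (dist e i (last i s) <= m)%N by apply: dist_le; apply/walkP; exists s.
have := dist_stepr i Hy; rewrite H; lia.
Qed.

Section Cut.
Variable A : pred 'I_n.+1.
Variables v w : 'I_n.+1.
Hypothesis Hv : A v.
Hypothesis Hcross : forall a b, e a b -> ~~ A a -> A b -> a = w /\ b = v.

Lemma cut_walk s a : ~~ A a -> path e a s -> A (last a s) ->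
  exists s', [/\ (size s' < size s)%N, path e v s' & last v s' = last a s].
Proof.
elim: s a => [|b s IH] a Ha /=; first by move=> _ H; rewrite H in Ha.
move=> /andP[Hab Hp] Hl.
case: (boolP (A b)) => Hb.
  have [_ Hbv] := Hcross Hab Ha Hb; subst b.
  by exists s; split.
have [s' [H1 H2 H3]] := IH b Hb Hp Hl.
by exists s'; split => //; apply: ltnW.
Qed.

Lemma cut_dist j : ~~ A w -> e w v -> A j -> dist e w j = (dist e v j).+1.
Proof.
move=> Hw Hwv Hj; apply/eqP; rewrite eqn_leq dist_stepl //=.
have /walkP[s [Hs Hp Hl]] := dist_walk w j.
rewrite -Hl in Hj.
have [s' [H1 H2 H3]] := cut_walk Hw Hp Hj.
have : (dist e v j <= size s')%N by apply: dist_le; apply/walkP; exists s'; rewrite H3 Hl.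
by rewrite -Hs; lia.
Qed.
End Cut.

End Walks.

Section Tree.
Variable n : nat.
Variable e : rel 'I_n.+1.
Hypothesis hsym : symmetric e.
Hypothesis eirr : irreflexive e.
Hypothesis econn : forall i j : 'I_n.+1, connect e i j.
Hypothesis hedges : num_edges e = n.

Local Notation r := (ord0 : 'I_n.+1).
Local Notation depth u := (dist e r u).

Definition par (u : 'I_n.+1) : 'I_n.+1 :=
  if [pick w | e w u && ((dist e r w).+1 == dist e r u)] is Some w then w else r.

Lemma depth_r : depth r = 0%N.
Proof. exact: dist_self. Qed.

Lemma depth0 u : depth u = 0%N -> u = r.
Proof. by move=> H; symmetry; apply: dist0 H. Qed.

Lemma par_r : par r = r.
Proof.
rewrite /par; case: pickP => // w /andP[_]; by rewrite depth_r.
Qed.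

Lemma par_edge u : u != r -> e (par u) u /\ (depth (par u)).+1 = depth u.
Proof.
move=> Hu; rewrite /par; case: pickP => [w /andP[H1 /eqP H2] //|H].
exfalso; case Hd: (depth u) => [|m]; first by move/depth0: Hd => Hd; rewrite Hd eqxx in Hu.
have [w [Hw1 Hw2]] := dist_pred econn Hd.
by have := H w; rewrite Hw1 Hw2 Hd eqxx.
Qed.

Lemma depth_par u : u != r -> depth (par u) = (depth u).-1.
Proof. by move=> /par_edge[_ <-]. Qed.

Lemma edge_par a b : e a b -> ((a != r) && (par a == b)) || ((b != r) && (par b == a)).
Proof.
move=> Hab.
apply/negPn/negP => Hn.
set E := [set q : 'I_n.+1 * 'I_n.+1 | e q.1 q.2].
have HE : (#|E| <= n.*2.+1)%N.
  by move: hedges; rewrite /num_edges -/E; lia.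
set P1 := [set (u, par u) | u in [set~ r]].
set P2 := [set (par u, u) | u in [set~ r]].
have HP1 : #|P1| = n.
  by rewrite card_imset ?cardsC1 ?card_ord // => u1 u2 [].
have HP2 : #|P2| = n.
  by rewrite card_imset ?cardsC1 ?card_ord // => u1 u2 [].
have Hdis : P1 :&: P2 = set0.
  apply/setP => -[q1 q2]; rewrite !inE; apply/negP => /andP[].
  move=> /imsetP[u1 Hu1 [-> ->]] /imsetP[u2 Hu2 [H1 H2]].
  rewrite !inE in Hu1 Hu2.
  have := depth_par Hu1; have := depth_par Hu2.
  rewrite -H1 -H2 => D1 D2.
  have := par_edge Hu1; have := par_edge Hu2; rewrite -H1 -H2 => -[_ E1] [_ E2].
  lia.
have Hsub : P1 :|: P2 :|: [set (a, b); (b, a)] \subset E.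
  apply/subsetP => -[q1 q2]; rewrite !inE => /orP[/orP[]|/orP[]].
  - by move=> /imsetP[u Hu [-> ->]]; rewrite !inE in Hu; rewrite /= hsym; case: (par_edge Hu).
  - by move=> /imsetP[u Hu [-> ->]]; rewrite !inE in Hu; case: (par_edge Hu).
  - by case/eqP => -> ->.
  - by case/eqP => -> ->; rewrite /= hsym.
have Hnot : [disjoint P1 :|: P2 & [set (a, b); (b, a)]].
  rewrite -setI_eq0; apply/eqP/setP => -[q1 q2]; rewrite !inE.
  apply/negP => /andP[/orP[] /imsetP[u Hu [H1 H2]]]; rewrite !inE in Hu;
    case/orP => /eqP[H3 H4]; subst; move: Hn; rewrite ?Hu ?eqxx ?orbT //.
have Hab2 : (a, b) != (b, a).
  apply/negP => /eqP[Hba _]; by rewrite Hba eirr in Hab.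
have := subset_leq_card Hsub.
rewrite cardsU (cardsU P1) Hdis cards0 cards2 Hab2 HP1 HP2.
have -> : (P1 :|: P2) :&: [set (a, b); (b, a)] = set0.
  by apply/eqP; rewrite setI_eq0.
rewrite cards0; lia.
Qed.


Definition desc (v j : 'I_n.+1) : bool :=
  (depth v <= depth j)%N && (iter (depth j - depth v) par j == v).

Lemma depth_iter j k : (k <= depth j)%N -> depth (iter k par j) = (depth j - k)%N.
Proof.
elim: k => [|k IH] Hk; first by rewrite subn0.
rewrite iterS; have Hi := IH (ltnW Hk).
have Hne : iter k par j != r.
  by apply/negP => /eqP Hr; move: Hi; rewrite Hr depth_r; lia.
rewrite depth_par // Hi; lia.
Qed.

Lemma iter_root j : iter (depth j) par j = r.
Proof. by apply: depth0; rewrite depth_iter // subnn. Qed.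

Lemma desc_root j : desc r j.
Proof. by rewrite /desc depth_r subn0 iter_root eqxx. Qed.

Lemma desc_refl v : desc v v.
Proof. by rewrite /desc leqnn subnn eqxx. Qed.

Lemma desc_eq v j : desc v j -> depth v = depth j -> j = v.
Proof. by move=> /andP[_ /eqP H] Hd; rewrite -Hd subnn in H. Qed.

Lemma desc_up c j : c != r -> desc c j -> desc (par c) j.
Proof.
move=> Hc /andP[H1 /eqP H2]; have Hd := par_edge Hc; case: Hd => _ Hd.
rewrite /desc; apply/andP; split; first lia.
have -> : (depth j - depth (par c) = (depth j - depth c).+1)%N by lia.
by rewrite iterS H2.
Qed.

Lemma desc_down v a : a != r -> desc v (par a) -> desc v a.
Proof.
move=> Ha /andP[H1 /eqP H2]; have Hd := par_edge Ha; case: Hd => _ Hd.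
rewrite /desc; apply/andP; split; first lia.
have -> : (depth a - depth v = (depth (par a) - depth v).+1)%N by lia.
by rewrite iterSr H2.
Qed.

Lemma desc_par_not v : v != r -> ~~ desc v (par v).
Proof.
move=> Hv; apply/negP => /andP[H1 _]; have [_ Hd] := par_edge Hv; lia.
Qed.

Lemma desc_cross v a b : v != r -> e a b -> ~~ desc v a -> desc v b ->
  a = par v /\ b = v.
Proof.
move=> Hv Hab Ha Hb.
case/orP: (edge_par Hab) => /andP[Hne /eqP Hp].
  by subst b; move: Ha; rewrite (desc_down Hne Hb).
case: (eqVneq b v) => [Hbv|Hbv]; first by subst; split.
exfalso; move: Ha; rewrite -Hp; apply/negP/negPn.
move: (Hb) => /andP[H1 /eqP H2].
have Hlt : (depth v < depth b)%N.
  rewrite ltn_neqAle H1 andbT; apply/negP => /eqP H.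
  by move: Hbv; rewrite (desc_eq Hb H) eqxx.
have [_ Hd] := par_edge Hne.
rewrite /desc; apply/andP; split; first lia.
have H3 : (depth b - depth v = (depth (par b) - depth v).+1)%N by lia.
by rewrite H3 iterSr in H2; rewrite H2.
Qed.

Lemma K1 v j : v != r -> desc v j -> dist e (par v) j = (dist e v j).+1.
Proof.
move=> Hv Hj.
have [He _] := par_edge Hv.
apply: (@cut_dist n e econn (desc v) v (par v)) => //.
- exact: desc_refl.
- by move=> a b Hab Ha Hb; apply: desc_cross.
- exact: desc_par_not.
Qed.

Lemma K2 v j : v != r -> ~~ desc v j -> dist e v j = (dist e (par v) j).+1.
Proof.
move=> Hv Hj.
have [He _] := par_edge Hv.
apply: (@cut_dist n e econn (predC (desc v)) (par v) v) => //=.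
- by rewrite desc_par_not.
- move=> a b Hab /negPn Ha Hb.
  have Hba : e b a by rewrite hsym.
  have [H1 H2] := desc_cross Hv Hba Hb Ha.
  by split.
- by rewrite negbK desc_refl.
- by rewrite hsym.
Qed.

Lemma child_uniq c1 c2 j : c1 != r -> c2 != r -> par c1 = par c2 ->
  desc c1 j -> desc c2 j -> c1 = c2.
Proof.
move=> H1 H2 Hp /andP[_ /eqP D1] /andP[_ /eqP D2].
have [_ E1] := par_edge H1; have [_ E2] := par_edge H2.
have Hd : depth c1 = depth c2 by rewrite -E1 -E2 Hp.
by rewrite -D1 -D2 Hd.
Qed.

Lemma child_exists v j : desc v j -> j != v ->
  exists c, [/\ c != r, par c = v & desc c j].
Proof.
move=> Hj Hjv; move: (Hj) => /andP[H1 /eqP H2].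
have Hlt : (depth v < depth j)%N.
  rewrite ltn_neqAle H1 andbT; apply/negP => /eqP H.
  by move: Hjv; rewrite (desc_eq Hj H) eqxx.
set k := (depth j - depth v).-1.
have Hk : (k <= depth j)%N by rewrite /k; lia.
have Dc := depth_iter Hk.
have Hc : iter k par j != r.
  by apply/negP => /eqP Hr; move: Dc; rewrite Hr depth_r /k; lia.
exists (iter k par j); split => //.
  by rewrite -iterS /k prednK ?subn_gt0.
rewrite /desc Dc; apply/andP; split; first lia.
by have -> : (depth j - (depth j - k) = k)%N by lia.
Qed.

End Tree.

Section Sums.
Variable n : nat.
Variable e : rel 'I_n.+1.
Hypothesis hsym : symmetric e.
Hypothesis eirr : irreflexive e.
Hypothesis econn : forall i j : 'I_n.+1, connect e i j.
Hypothesis hedges : num_edges e = n.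
Variable R : nzRingType.
Variable xv : 'I_n.+1 -> R.

Local Notation r := (ord0 : 'I_n.+1).
Local Notation par := (par e).
Local Notation desc := (desc e).
Local Open Scope ring_scope.

Definition child (v c : 'I_n.+1) := (c != r) && (par c == v).

Definition Dn d v := \sum_(j | desc v j && (dist e v j == d)) xv j.
Definition Sd d v := \sum_(j | dist e v j == d) xv j.
Definition Qs d v k := \sum_(c | child v c && (k <= c)%N) Dn d c.

Definition nxt (v : 'I_n.+1) (k : nat) : option 'I_n.+1 :=
  [pick c | child v c && (k <= c)%N &&
            [forall c' : 'I_n.+1, (child v c' && (k <= c')%N) ==> (c <= c')%N]].

Lemma nxt_some v k c : nxt v k = Some c ->
  [/\ child v c, (k <= c)%N & forall c', child v c' -> (k <= c')%N -> (c <= c')%N].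
Proof.
rewrite /nxt; case: pickP => // c0 /andP[/andP[H1 H2] /forallP H3] [<-].
split => // c' Hc' Hk; by have := H3 c'; rewrite Hc' Hk.
Qed.

Lemma nxt_none v k c : nxt v k = None -> child v c -> (k <= c)%N -> False.
Proof.
rewrite /nxt; case: pickP => // H _ Hc Hk.
have Pc : child v c && (k <= c)%N by rewrite Hc Hk.
case: (@arg_minnP _ c (fun c0 => child v c0 && (k <= c0)%N) (fun c : 'I_n.+1 => nat_of_ord c) Pc) => c0 /andP[Hc0 Hk0] Hmin.
have := H c0; rewrite Hc0 Hk0 /=; move/negP; apply.
apply/forallP => c'; apply/implyP => Hc'; exact: Hmin.
Qed.

Lemma Qs_some d v k c : nxt v k = Some c -> Qs d v k = Dn d c + Qs d v c.+1.
Proof.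
move=> /nxt_some [Hc Hk Hmin].
rewrite /Qs (bigD1 c) /=; last by rewrite Hc Hk.
congr (_ + _); apply: eq_bigl => c'.
case Hc': (child v c') => //=.
apply/andP/idP => [[H1 H2]|H].
  have := Hmin c' Hc' H1; rewrite ltn_neqAle eq_sym; move: H2 => -> ->.
  done.
split; first lia.
by apply/eqP => Hcc; subst; rewrite ltnn in H.
Qed.

Lemma Qs_none d v k : nxt v k = None -> Qs d v k = 0.
Proof.
move=> Hn; rewrite /Qs big_pred0 // => c.
by apply/negP => /andP[Hc Hk]; apply: (nxt_none Hn Hc Hk).
Qed.

Lemma Dn0 v : Dn 0 v = xv v.
Proof.
rewrite /Dn (big_pred1 v) // => j /=.
apply/andP/eqP => [[_ /eqP H]|->]; first by apply: esym; apply: dist0 H.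
by rewrite desc_refl // dist_self.
Qed.

Lemma DnS d v : Dn d.+1 v = Qs d v 0.
Proof.
rewrite /Qs /Dn big_mkcond /=.
under [RHS]eq_bigr do rewrite big_mkcond /=.
rewrite exchange_big /=; apply: eq_bigr => j _.
case: ifP => [/andP[Hj /eqP Hd]|Hj].
  have Hjv : j != v by apply/negP => /eqP Hjv; subst; rewrite dist_self in Hd.
  have [c0 [Hc0 Hp Hdc]] := child_exists econn hedges Hj Hjv.
  rewrite (bigD1 c0) /=; last by rewrite /child Hc0 Hp eqxx.
  have Hd0 : dist e c0 j = d.
    by move: Hd; rewrite -Hp (K1 hsym eirr econn hedges Hc0 Hdc) => -[].
  rewrite Hdc Hd0 eqxx /= big1 ?addr0 // => c /andP[/andP[/andP[Hc /eqP Hpc] _] Hne].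
  case: ifP => // /andP[Hdcj _].
  by move: Hne; rewrite (child_uniq econn Hc Hc0 _ Hdcj Hdc) ?eqxx // Hp.
rewrite big1 // => c /andP[/andP[Hc /eqP Hpc] _].
case: ifP => // /andP[Hdcj /eqP Hdc]; exfalso.
move: Hj; rewrite -Hpc (desc_up econn hedges Hc Hdcj) /=.
by rewrite (K1 hsym eirr econn hedges Hc Hdcj) Hdc eqxx.
Qed.


Lemma Sd_rec d v : Sd d v = Dn d v
  + (if (v != r) && (0 < d)%N then Sd d.-1 (par v) else 0)
  - (if (v != r) && (1 < d)%N then Dn d.-2 v else 0).
Proof.
case: (eqVneq v r) => [->|Hv] /=.
  rewrite subr0 addr0 /Sd /Dn; apply: eq_bigl => j; by rewrite desc_root.
case: d => [|d] /=.
  rewrite subr0 addr0 /Sd /Dn; apply: eq_bigl => j.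
  apply/idP/andP => [/eqP H|[]//]; have Hj := dist0 econn H; subst j.
  by rewrite desc_refl // dist_self.
set X := \sum_(j | (dist e v j == d.+1) && ~~ desc v j) xv j.
have HX : X = \sum_(j | (dist e (par v) j == d) && ~~ desc v j) xv j.
  apply: eq_bigl => j; case: (boolP (desc v j)) => Hj; rewrite ?andbF ?andbT //.
  by rewrite (K2 hsym eirr econn hedges Hv Hj) eqSS.
have HS : Sd d (par v) = (if (0 < d)%N then Dn d.-1 v else 0) + X.
  rewrite HX /Sd (bigID (desc v)) /=; congr (_ + _).
  case: d {X HX} => [|d] /=.
    rewrite big_pred0 // => j; apply/negP => /andP[/eqP H Hj].
    by move: H; rewrite (K1 hsym eirr econn hedges Hv Hj).
  rewrite /Dn; apply: eq_bigl => j; rewrite andbC.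
  case: (boolP (desc v j)) => Hj //=.
  by rewrite (K1 hsym eirr econn hedges Hv Hj) eqSS.
rewrite HS /Sd (bigID (desc v)) /= -/X.
have -> : \sum_(i | (dist e v i == d.+1) && desc v i) xv i = Dn d.+1 v.
  by rewrite /Dn; apply: eq_bigl => j; rewrite andbC.
by rewrite [_ + X]addrC addrA addrK.
Qed.

Lemma out_sum (f : nat -> R) i K : (forall j, dist e i j < K)%N ->
  \sum_(d < K) f d * Sd d i = \sum_j f (dist e i j) * xv j.
Proof.
move=> H; rewrite /Sd.
under eq_bigr do rewrite mulr_sumr big_mkcond /=.
rewrite exchange_big /=; apply: eq_bigr => j _.
rewrite (bigD1 (Ordinal (H j))) //= eqxx big1 ?addr0 // => d Hd.
case: ifP => // /eqP Hdd; move: Hd; rewrite -/(is_true _).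
by move/negP; case; apply/eqP/val_inj; rewrite /= Hdd.
Qed.

End Sums.

Section Run.
Variable R : nzRingType.
Variable L : nat.
Variable f : nat -> R.
Variable x : 'cV[R]_L.
Local Open Scope ring_scope.

Definition refs (c : instr) : seq nat :=
  match c with IAdd a b | ISub a b | IMul a b => [:: a; b] | _ => [::] end.

Definition exec' (g : nat -> R) (c : instr) : R :=
  match c with
  | IInput k => if insub k is Some i then x i ord0 else 0
  | IConstF k => f k
  | IAdd a b => g a + g b
  | ISub a b => g a - g b
  | IMul a b => g a * g b
  end.

Lemma exec_eq regs c : exec_instr f x regs c = exec' (fun a => nth 0 regs a) c.
Proof. by case: c. Qed.

Lemma exec'_ext g1 g2 c : (forall a, a \in refs c -> g1 a = g2 a) -> exec' g1 c = exec' g2 c.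
Proof.
case: c => //= a b H; rewrite !H // !inE eqxx ?orbT //.
Qed.

Lemma size_foldl regs p :
  size (foldl (fun regs c => rcons regs (exec_instr f x regs c)) regs p) = (size regs + size p)%N.
Proof.
elim: p regs => [|c p IH] regs /=; first by rewrite addn0.
by rewrite IH size_rcons addSnnS.
Qed.

Lemma size_run p : size (run f x p) = size p.
Proof. by rewrite /run size_foldl. Qed.

Lemma run_take p m : (m < size p)%N ->
  run f x (take m.+1 p) = rcons (run f x (take m p))
     (exec_instr f x (run f x (take m p)) (nth (IConstF 0) p m)).
Proof. by move=> Hm; rewrite (take_nth (IConstF 0) Hm) /run foldl_rcons. Qed.

Lemma run_correct (p : seq instr) (V : nat -> R) :
  (forall k, (k < size p)%N ->
     (forall a, a \in refs (nth (IConstF 0) p k) -> (a < k)%N \/ ((size p <= a)%N /\ V a = 0))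
     /\ exec' V (nth (IConstF 0) p k) = V k) ->
  forall k, (k < size p)%N -> nth 0 (run f x p) k = V k.
Proof.
move=> H.
suff S : forall m, (m <= size p)%N -> forall k, (k < m)%N -> nth 0 (run f x (take m p)) k = V k.
  by move=> k Hk; rewrite -(S _ (leqnn _) _ Hk) take_size.
elim=> [//|m IH] Hm k Hk.
rewrite run_take // nth_rcons size_run size_take.
have Hm' : (m < size p)%N by [].
rewrite Hm'.
rewrite ltnS leq_eqVlt in Hk; case/orP: Hk => [/eqP->|Hkm]; last first.
  by rewrite Hkm; exact: IH (ltnW Hm) _ Hkm.
rewrite ltnn eqxx.
have [H1 H2] := H m Hm'.
rewrite exec_eq -H2; apply: exec'_ext => a Ha.
case: (H1 a Ha) => [Ham|[Hpa ->]]; first exact: IH (ltnW Hm) _ Ham.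
rewrite nth_default // size_run size_take Hm'; lia.
Qed.

End Run.

Section Layout.
Variable n : nat.
Variable D : nat.
Local Notation L := n.+1.
Local Notation K := D.+1.
Definition W := (6 * L + 1)%N.
Definition NN := (K * W)%N.

Inductive slot :=
 | SDn of nat & 'I_L | SP of nat & 'I_L | ST of nat & 'I_L | SS of nat & 'I_L
 | SF of nat | SM of nat & 'I_L | SQ of nat & 'I_L | SZ.

Definition pos (s : slot) : nat :=
  match s with
  | SDn d v => d * W + v
  | SP d c => d * W + L + (n - c)
  | ST d v => d * W + 2 * L + v
  | SS d v => d * W + 3 * L + v
  | SF d => d * W + 4 * L
  | SM d v => d * W + 4 * L + 1 + v
  | SQ d v => d * W + 5 * L + 1 + v
  | SZ => NN
  end%N.

Definition valid (s : slot) : bool :=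
  match s with
  | SDn d _ | SP d _ | ST d _ | SS d _ | SF d | SM d _ | SQ d _ => (d < K)%N
  | SZ => false
  end.

Definition dec (k : nat) : slot :=
  if (k < NN)%N then
    let d := (k %/ W)%N in let o := (k %% W)%N in
    if (o < L)%N then SDn d (inord o)
    else if (o < 2 * L)%N then SP d (inord (n - (o - L)))
    else if (o < 3 * L)%N then ST d (inord (o - 2 * L))
    else if (o < 4 * L)%N then SS d (inord (o - 3 * L))
    else if (o == 4 * L)%N then SF d
    else if (o < 5 * L + 1)%N then SM d (inord (o - (4 * L + 1)))
    else SQ d (inord (o - (5 * L + 1)))
  else SZ.

Lemma W_gt0 : (0 < W)%N. Proof. by rewrite /W addn1. Qed.

Lemma pos_lt s : valid s -> (pos s < NN)%N.
Proof.
move=> Hv.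
have Hd : forall d o, (d < K)%N -> (o < W)%N -> (d * W + o < NN)%N.
  move=> d o Hd Ho; rewrite /NN.
  apply: (@leq_trans (d.+1 * W)); first by rewrite mulSn; lia.
  by rewrite leq_mul2r Hd orbT.
case: s Hv => /= [d v|d v|d v|d v|d|d v|d v|//] Hv;
  rewrite -?addnA; apply: Hd => //; rewrite /W; try have := ltn_ord v; lia.
Qed.

Lemma divmodW d o : (o < W)%N -> ((d * W + o) %/ W = d /\ (d * W + o) %% W = o)%N.
Proof.
move=> Ho; split.
  by rewrite divnMDl ?W_gt0 // divn_small // addn0.
by rewrite modnMDl modn_small.
Qed.

Definition decW d o : slot :=
    if (o < L)%N then SDn d (inord o)
    else if (o < 2 * L)%N then SP d (inord (n - (o - L)))
    else if (o < 3 * L)%N then ST d (inord (o - 2 * L))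
    else if (o < 4 * L)%N then SS d (inord (o - 3 * L))
    else if (o == 4 * L)%N then SF d
    else if (o < 5 * L + 1)%N then SM d (inord (o - (4 * L + 1)))
    else SQ d (inord (o - (5 * L + 1))).

Lemma dec_DW d o : (d < K)%N -> (o < W)%N -> dec (d * W + o) = decW d o.
Proof.
move=> Hd Ho; rewrite /dec.
have -> : (d * W + o < NN)%N.
  rewrite /NN; apply: (@leq_trans (d.+1 * W)); first by rewrite mulSn; lia.
  by rewrite leq_mul2r Hd orbT.
by have [-> ->] := divmodW d Ho.
Qed.

Ltac solve_dec :=
  repeat (case: ifP => [?|/negbT ?]); try (exfalso; lia);
  try (congr (_ _ _); apply: val_inj; rewrite /= inordK; lia).

Lemma dec_pos s : valid s -> dec (pos s) = s.
Proof.
case: s => /= [d v|d v|d v|d v|d|d v|d v|//] Hv; rewrite -?addnA dec_DW //;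
  rewrite /W; try (have ? := ltn_ord v); try lia; rewrite /decW; solve_dec; done.
Qed.

Lemma dec_big k : (NN <= k)%N -> dec k = SZ.
Proof. by rewrite /dec leqNgt => /negbTE ->. Qed.

Lemma pos_dec k : (k < NN)%N -> valid (dec k) /\ pos (dec k) = k.
Proof.
move=> Hk.
have Hd : (k %/ W < K)%N by rewrite ltn_divLR ?W_gt0.
have Ho : (k %% W < W)%N by rewrite ltn_mod W_gt0.
have Hk' := divn_eq k W.
move: Hd Ho Hk'; set d := (k %/ W)%N; set o := (k %% W)%N => Hd Ho ->.
rewrite dec_DW //.
rewrite /W in Ho; rewrite /decW; repeat (case: ifP => [?|/negbT ?]); rewrite /= ?inordK /W; try lia.
Qed.

End Layout.

Section Prog.
Variable n : nat.
Variable e : rel 'I_n.+1.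
Hypothesis hsym : symmetric e.
Hypothesis eirr : irreflexive e.
Hypothesis econn : forall i j : 'I_n.+1, connect e i j.
Hypothesis hedges : num_edges e = n.
Variable D : nat.

Local Notation r := (ord0 : 'I_n.+1).
Local Notation par := (par e).
Local Notation nxt := (nxt e).
Local Notation N := (NN n D).
Local Notation posD := (pos D).

Definition refP d (o : option 'I_n.+1) : nat :=
  if o is Some c then posD (SP d c) else N.

Definition ins (s : slot n) : instr :=
  match s with
  | SDn 0 v => IInput v
  | SDn d.+1 v => IAdd (refP d (nxt v 0)) N
  | SP d c => IAdd (posD (SDn d c)) (refP d (nxt (par c) c.+1))
  | ST d v => IAdd (posD (SDn d v))
                   (if (v != r) && (0 < d)%N then posD (SS d.-1 (par v)) else N)
  | SS d v => ISub (posD (ST d v))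
                   (if (v != r) && (1 < d)%N then posD (SDn d.-2 v) else N)
  | SF d => IConstF d
  | SM d v => IMul (posD (SF n d)) (posD (SS d v))
  | SQ d v => IAdd (if (0 < d)%N then posD (SQ d.-1 v) else N) (posD (SM d v))
  | SZ => IConstF 0
  end.

Definition prog : seq instr := mkseq (fun k => ins (dec n D k)) N.

Lemma size_prog : size prog = N.
Proof. by rewrite size_mkseq. Qed.

Lemma refs_ok s : valid D s -> forall a, a \in refs (ins s) ->
  (a < posD s)%N \/ a = N.
Proof.
have HW : (W n = 6 * n.+1 + 1)%N by [].
case: s => [[|d] v|d c|d v|d v|d|d v|d v|//] /= Hv a; rewrite ?inE //;
  try (case/orP => /eqP ->); rewrite /=.
- case: (nxt v 0) => [c|] /=; last by right.
  by left; rewrite mulSn; have := ltn_ord c; have := ltn_ord v; lia.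
- right => //.
- left; have := ltn_ord c; lia.
- case H: (nxt (par c) c.+1) => [c2|] /=; last by right.
  have [_ Hc2 _] := nxt_some H.
  by left; have := ltn_ord c2; have := ltn_ord c; lia.
- left; lia.
- case: (v != r) => /=; last by right.
  case: d Hv => [|d] Hv /=; first by right.
  by left; rewrite mulSn; have := ltn_ord (par v); have := ltn_ord v; lia.
- left; lia.
- case: (v != r) => /=; last by right.
  case: d Hv => [|[|d]] Hv /=; try by right.
  by left; rewrite !mulSn; have := ltn_ord v; lia.
- left; have := ltn_ord v; lia.
- left; lia.
- case: d Hv => [|d] Hv /=; first by right.
  by left; rewrite mulSn; have := ltn_ord v; lia.
- left; lia.
Qed.


Variable R : nzRingType.
Variable f : nat -> R.
Variable x : 'cV[R]_n.+1.
Local Notation xv := (fun j : 'I_n.+1 => x j ord0).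
Local Open Scope ring_scope.

Definition val (s : slot n) : R :=
  match s with
  | SDn d v => Dn e xv d v
  | SP d c => Dn e xv d c + Qs e xv d (par c) c.+1
  | ST d v => Dn e xv d v + (if (v != r) && (0 < d)%N then Sd e xv d.-1 (par v) else 0)
  | SS d v => Sd e xv d v
  | SF d => f d
  | SM d v => f d * Sd e xv d v
  | SQ d v => \sum_(d' < d.+1) f d' * Sd e xv d' v
  | SZ => 0
  end.

Definition V k := val (dec n D k).

Lemma Vpos s : valid D s -> V (posD s) = val s.
Proof. by move=> Hv; rewrite /V dec_pos. Qed.

Lemma VN : V N = 0.
Proof. by rewrite /V dec_big. Qed.

Arguments pos : simpl never.
Lemma val_ok s : valid D s -> exec' f x V (ins s) = val s.
Proof.
case: s => [[|d] v|d c|d v|d v|d|d v|d v|//] /= Hv.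
- by rewrite valK (Dn0 econn).
- rewrite VN addr0 (DnS hsym eirr econn hedges).
  case H: (nxt v 0) => [c|] /=; last by rewrite VN (Qs_none _ _ H).
  have [/andP[_ /eqP Hp] _ _] := nxt_some H.
  have Hv' : (d < D.+1)%N by apply: ltnW.
  by rewrite Vpos //= (Qs_some hedges (fun j => x j ord0) d H) Hp.
- rewrite Vpos //=; congr (_ + _).
  case H: (nxt (par c) c.+1) => [c2|] /=; last by rewrite VN (Qs_none _ _ H).
  have [/andP[_ /eqP Hp] _ _] := nxt_some H.
  by rewrite Vpos //= (Qs_some hedges _ _ H) Hp.
- rewrite Vpos //=; case: (v != r) => //=; last by rewrite VN.
  case: d Hv => [|d] Hv /=; first by rewrite VN.
  by rewrite Vpos //=; apply: ltnW.
- rewrite Vpos //= [RHS](Sd_rec hsym eirr econn hedges).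
  case: (v != r) => /=; last by rewrite VN.
  case: d Hv => [|[|d]] Hv /=; try by rewrite VN.
  rewrite Vpos //=; lia.
- by [].
- by rewrite !Vpos.
- rewrite Vpos //; case: d Hv => [|d] Hv /=.
    by rewrite VN add0r big_ord1.
  have Hv' : (d < D.+1)%N by apply: ltnW.
  by rewrite Vpos //= (big_ord_recr d.+1) /=.
Qed.

Lemma prog_correct k : (k < N)%N -> nth 0 (run f x prog) k = V k.
Proof.
move=> Hk0; apply: (@run_correct R n.+1 f x prog V); last by rewrite size_prog.
move=> k0; rewrite size_prog => Hk.
rewrite nth_mkseq //.
have [Hv Hp] := pos_dec Hk.
split.
  move=> a Ha; case: (refs_ok Hv Ha) => [H|->]; first by left; rewrite -Hp.
  by right; rewrite VN.
exact: val_ok.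
Qed.

End Prog.

Local Open Scope ring_scope.
Theorem lemma6p2 (R : realType) :
  exists C : nat,
  forall (L : nat) (e : rel 'I_L),
    is_tree e ->
    exists (prog : seq instr) (out : 'I_L -> nat),
      (size prog <= C * L * maxn 1 (diam e))%N /\
      forall (f : nat -> R) (x : 'cV[R]_L) (i : 'I_L),
        nth 0 (run f x prog) (out i) = (mask_mx e f *m x) i ord0.
Proof.
exists 14%N => L e [HL [hsym eirr] hconn hedges].
case: L e hsym eirr hconn hedges HL => [//|n] e hsym eirr hconn hedges _.
rewrite /= in hedges.
set D := diam e.
exists (prog e D), (fun i => pos D (SQ D i)).
split.
  rewrite size_prog /NN /W.
  have H1 : (D.+1 <= 2 * maxn 1 D)%N by rewrite /maxn; case: ifP => H; lia.
  have H2 : (6 * n.+1 + 1 <= 7 * n.+1)%N by lia.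
  have := leq_mul H1 H2; rewrite mulnC.
  move=> H; apply: (leq_trans H); set m := maxn 1 D; apply: eq_leq; nia.
move=> f x i.
have Hv : valid D (SQ D i) by rewrite /= ltnSn.
rewrite (prog_correct hsym eirr hconn hedges) ?pos_lt // /V dec_pos //=.
rewrite (out_sum (fun j => x j ord0) f (i := i)); last first.
  move=> j; rewrite ltnS /D /diam.
  exact: (@leq_bigmax _ (fun p : 'I_n.+1 * 'I_n.+1 => dist e p.1 p.2) (i, j)).
by rewrite !mxE; apply: eq_bigr => j _; rewrite ?mxE.
Qed.
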